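(* Let $M$ be a modular lattice of finite length and $x,y\in S(M)$. If $y$ covers $x$ in the partially ordered set $S(M)$ (ordered as in $M$), then $x<y\le x^*$ in $M$.
   Context: $M$ is a modular lattice of finite length (every chain finite) with least element $0$ and greatest element $1$. For $a\in M$: $a^*$ is the join of all elements covering $a$ if $a<1$, and $1^*=1$. An interval $[a,b]$ is \emph{atomistic} if every element of it is a join of atoms of $[a,b]$ (elements covering $a$). The \emph{skeleton} $S(M)$ is the set of least elements of the maximal (under inclusion) atomistic intervals of $M$. *)

(* Defs.v *)
From HB Require Import structures.
From mathcomp Require Import all_boot all_order.
Set Implicit Arguments. Unset Strict Implicit. Unset Printing Implicit Defensive.
Import Order.Theory.
Local Open Scope order_scope.

Section ModLat.
Context {disp : Order.disp_t} {T : tbLatticeType disp}.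

Definition modular : Prop :=
  forall x y z : T, x <= z -> x `|` (y `&` z) = (x `|` y) `&` z.

Definition is_chain (C : T -> Prop) : Prop :=
  forall x y, C x -> C y -> (x <= y) \/ (y <= x).

Definition finite_length : Prop :=
  forall C : T -> Prop, is_chain C -> exists s : seq T, forall x, C x -> x \in s.

Definition covers (a b : T) : Prop :=
  a < b /\ forall c, ~ (a < c /\ c < b).

Definition is_lub (A : T -> Prop) (s : T) : Prop :=
  (forall t, A t -> t <= s) /\ (forall u, (forall t, A t -> t <= u) -> s <= u).

(* s = a^* : join of all covers of a if a < 1, and 1^* = 1 *)
Definition is_star (a s : T) : Prop :=
  (a = \top -> s = \top) /\ (a < \top -> is_lub (covers a) s).

Definition in_itv (a b z : T) : Prop := a <= z /\ z <= b.

(* c is the join in the interval [a,b] of the set A (empty join = a) *)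
Definition is_join_in (a b : T) (A : T -> Prop) (c : T) : Prop :=
  in_itv a b c /\ (forall t, A t -> t <= c) /\
  (forall u, in_itv a b u -> (forall t, A t -> t <= u) -> c <= u).

Definition atomistic (a b : T) : Prop :=
  a <= b /\
  forall c, in_itv a b c ->
    exists A : T -> Prop, (forall t, A t -> in_itv a b t /\ covers a t)
                          /\ is_join_in a b A c.

Definition max_atomistic (a b : T) : Prop :=
  atomistic a b /\
  forall a' b', atomistic a' b' ->
    (forall z, in_itv a b z -> in_itv a' b' z) ->
    (forall z, in_itv a b z <-> in_itv a' b' z).

Definition in_skeleton (x : T) : Prop := exists b, max_atomistic x b.

Definition skel_covers (x y : T) : Prop :=
  in_skeleton x /\ in_skeleton y /\ x < y /\
  forall z, in_skeleton z -> ~ (x < z /\ z < y).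

End ModLat.

(* Main.v *)
Require Import Defs.
From mathcomp Require Import all_boot all_order.
From Stdlib Require Import Classical ClassicalEpsilon.
Import Order.Theory.
Local Open Scope order_scope.



Lemma ltE' {d} {M : tbLatticeType d} (a b : M) : a < b <-> a <= b /\ a <> b.
Proof.
rewrite lt_neqAle; split.
- by move/andP=> [/eqP H1 H2].
- by move=> [H1 H2]; apply/andP; split=> //; apply/eqP.
Qed.

Lemma cov_eq {d} {M : tbLatticeType d} {a b c : M} :
  covers a b -> a <= c -> c <= b -> c = a \/ c = b.
Proof.
move=> [Hab Hn] H1 H2.
case: (c =P a)=> [->|Hca]; first by left.
case: (c =P b)=> [->|Hcb]; first by right.
exfalso; apply: (Hn c); split; apply/ltE'; split=> //; by move=> E; subst.
Qed.

Lemma persp1 {d} {M : tbLatticeType d} (Hmod : @modular d M) (x y : M) :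
  covers (x `&` y) x -> covers y (x `|` y).
Proof.
move=> Hc; have [Hlt Hn] := Hc.
split.
- apply/ltE'; split; first exact: leUr.
  move=> E; have Hxy : x <= y by rewrite E leUl.
  by move: Hlt; rewrite meet_l // ltxx.
- move=> z [/ltE' [Hyz Hyz'] /ltE' [Hz1 Hz2]].
  have := cov_eq Hc (_ : x `&` y <= z `&` x).
  have H1 : x `&` y <= z `&` x.
    by rewrite lexI leIl andbT (le_trans (leIr _ _) Hyz).
  move=> /(_ H1 (leIr _ _)) [E|E].
  + apply: Hyz'.
    have H := Hmod y x z Hyz.
    rewrite (meetC x z) E (joinC y x) (meet_r Hz1) join_l ?leIr // in H.
  + apply: Hz2; apply: le_anti; rewrite Hz1 /= leUx Hyz andbT.
    by rewrite -E leIl.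
Qed.

Lemma persp2 {d} {M : tbLatticeType d} (Hmod : @modular d M) (x y : M) :
  covers y (x `|` y) -> covers (x `&` y) x.
Proof.
move=> Hc; have [Hlt Hn] := Hc.
split.
- apply/ltE'; split; first exact: leIl.
  move=> E; have Hxy : x <= y by rewrite -E leIr.
  by move: Hlt; rewrite join_r // ltxx.
- move=> z [/ltE' [Hyz Hyz'] /ltE' [Hz1 Hz2]].
  have H1 : y <= z `|` y by exact: leUr.
  have H2 : z `|` y <= x `|` y by rewrite leUx leUr andbT (le_trans Hz1 (leUl _ _)).
  have [E|E] := cov_eq Hc H1 H2.
  + apply: Hyz'; apply: le_anti; rewrite Hyz /= lexI.
    by rewrite Hz1 /= -E leUl.
  + apply: Hz2; have H := Hmod z y x Hz1.
    rewrite E (meet_r (leUl x y)) (meetC y x) (join_l Hyz) in H.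
    by rewrite H.
Qed.



Lemma strict_false {d} {M : tbLatticeType d} (Hfin : @finite_length d M) (f : nat -> M)
  (H : forall m n, (m < n)%N -> f m <> f n /\ (f m <= f n \/ f n <= f m)) : False.
Proof.
have Hch : is_chain (fun z => exists n, z = f n).
  move=> a b [m ->] [n ->].
  case: (ltngtP m n) => Hmn.
  - by case: (H m n Hmn) => _ [] ?; [left|right].
  - by case: (H n m Hmn) => _ [] ?; [right|left].
  - by subst; left.
have [s Hs] := Hfin _ Hch.
have Hinj : injective f.
  move=> m n E; case: (ltngtP m n) => Hmn //.
  - by case: (H m n Hmn) => /(_ E).
  - by case: (H n m Hmn) => /(_ (esym E)).
have Hu : uniq (map f (iota 0 (size s).+1)) by rewrite map_inj_uniq // iota_uniq.
have Hsub : {subset map f (iota 0 (size s).+1) <= s}.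
  by move=> z /mapP [n _ ->]; apply: Hs; exists n.
have := uniq_leq_size Hu Hsub.
by rewrite size_map size_iota ltnn.
Qed.

Lemma wf_of_noseq (T : Type) (R : T -> T -> Prop)
  (H : forall f : nat -> T, (forall n, R (f n.+1) (f n)) -> False) : well_founded R.
Proof.
move=> z; apply: NNPP => Hz.
have step : forall u, exists v, ~ Acc R u -> R v u /\ ~ Acc R v.
  move=> u; case: (classic (Acc R u)) => [Ha|Hna].
  - by exists u.
  - apply: NNPP => Hne; apply: Hna; constructor => v Hv.
    apply: NNPP => Hv'; apply: Hne; by exists v.
pose g u := proj1_sig (constructive_indefinite_description _ (step u)).
have gP : forall u, ~ Acc R u -> R (g u) u /\ ~ Acc R (g u).
  by move=> u; rewrite /g; case: constructive_indefinite_description.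
pose f n := iter n g z.
have HA : forall n, ~ Acc R (f n).
  by elim=> [|n IH] //=; have [] := gP _ IH.
apply: (H f) => n; exact: (gP _ (HA n)).1.
Qed.

Lemma wf_max (T : Type) (R : T -> T -> Prop) (Hwf : well_founded R) (P : T -> Prop) z0 :
  P z0 -> exists z, P z /\ forall z', P z' -> ~ R z' z.
Proof.
elim/(well_founded_ind Hwf): z0 => z0 IH Pz.
case: (classic (exists z', P z' /\ R z' z0)) => [[z' [Pz' Rz']]|Hn].
- exact: (IH z' Rz' Pz').
- by exists z0; split=> // z' Pz' Rz'; apply: Hn; exists z'.
Qed.

Lemma wf_lt {d} {M : tbLatticeType d} (Hfin : @finite_length d M) :
  well_founded (fun a b : M => a < b).
Proof.
apply: wf_of_noseq => f Hf.
have Hall : forall m n, (m < n)%N -> f n < f m.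
  move=> m; elim=> [|n IH] //; rewrite ltnS leq_eqVlt => /orP [/eqP ->|Hmn].
  - exact: Hf.
  - exact: lt_trans (Hf n) (IH Hmn).
apply: (strict_false Hfin f) => m n Hmn.
have Hl := Hall m n Hmn; split.
- by move=> E; move: Hl; rewrite E ltxx.
- by right; apply: ltW.
Qed.

Lemma wf_gt {d} {M : tbLatticeType d} (Hfin : @finite_length d M) :
  well_founded (fun a b : M => b < a).
Proof.
apply: wf_of_noseq => f Hf.
have Hall : forall m n, (m < n)%N -> f m < f n.
  move=> m; elim=> [|n IH] //; rewrite ltnS leq_eqVlt => /orP [/eqP ->|Hmn].
  - exact: Hf.
  - exact: lt_trans (IH Hmn) (Hf n).
apply: (strict_false Hfin f) => m n Hmn.
have Hl := Hall m n Hmn; split.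
- by move=> E; move: Hl; rewrite E ltxx.
- by left; apply: ltW.
Qed.

Lemma cover_exists {d} {M : tbLatticeType d} (Hfin : @finite_length d M) (u v : M) :
  u < v -> exists t, covers u t /\ t <= v.
Proof.
move=> Huv.
have [t [[Hut Htv] Hmin]] := @wf_max _ _ (wf_lt Hfin) (fun t => u < t /\ t <= v) _ (conj Huv (lexx v)).
exists t; split=> //; split=> // c [H1 H2].
by apply: (Hmin c) => //; split=> //; apply: le_trans (ltW H2) Htv.
Qed.

Lemma cocover_exists {d} {M : tbLatticeType d} (Hfin : @finite_length d M) (e c : M) :
  e < c -> exists w, e <= w /\ covers w c.
Proof.
move=> Hec.
have [w [[Hew Hwc] Hmax]] := @wf_max _ _ (wf_gt Hfin) (fun w => e <= w /\ w < c) _ (conj (lexx e) Hec).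
exists w; split=> //; split=> // z [H1 H2].
by apply: (Hmax z) => //; split=> //; apply: le_trans (ltW H1).
Qed.



Lemma leA {d} {M : tbLatticeType d} (a b : M) : a <= b -> b <= a -> a = b.
Proof. by move=> H1 H2; apply: le_anti; rewrite H1 H2. Qed.

Definition gen {d} {M : tbLatticeType d} (e : M) (L : seq M) : M :=
  foldr (fun t acc => t `|` acc) e L.
Definition okat {d} {M : tbLatticeType d} (e t : M) : Prop := t = e \/ covers e t.
Definition FJ {d} {M : tbLatticeType d} (e b : M) : Prop :=
  exists L, (forall t, t \in L -> okat e t) /\ gen e L = b.

Lemma gen_ge {d} {M : tbLatticeType d} (e : M) L : e <= gen e L.
Proof. elim: L => [|t L IH] /=; first exact: lexx. exact: le_trans IH (leUr _ _). Qed.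

Lemma gen_mem {d} {M : tbLatticeType d} (e : M) L t : t \in L -> t <= gen e L.
Proof.
elim: L => [|u L IH] //=; rewrite in_cons => /orP [/eqP ->|H]; first exact: leUl.
exact: le_trans (IH H) (leUr _ _).
Qed.

Lemma gen_le {d} {M : tbLatticeType d} (e : M) L u :
  e <= u -> (forall t, t \in L -> t <= u) -> gen e L <= u.
Proof.
move=> He; elim: L => [|t L IH] H //=.
rewrite leUx H ?mem_head //= IH // => s Hs; apply: H; by rewrite in_cons Hs orbT.
Qed.

Lemma okat_ge {d} {M : tbLatticeType d} (e t : M) : okat e t -> e <= t.
Proof. by case=> [->|[/ltW]]. Qed.

Lemma FJ_join {d} {M : tbLatticeType d} (e u v : M) : FJ e u -> FJ e v -> FJ e (u `|` v).
Proof.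
move=> [L1 [H1 E1]] [L2 [H2 E2]]; exists (L1 ++ L2); split.
- by move=> t; rewrite mem_cat => /orP [/H1|/H2].
- subst; apply: leA.
  + apply: gen_le; first exact: (le_trans (gen_ge e L1) (leUl _ _)).
    move=> t; rewrite mem_cat => /orP [H|H].
    * exact: le_trans (gen_mem _ _ _ H) (leUl _ _).
    * exact: le_trans (gen_mem _ _ _ H) (leUr _ _).
  + rewrite leUx; apply/andP; split; apply: gen_le; try exact: gen_ge;
    by move=> t Ht; apply: gen_mem; rewrite mem_cat Ht ?orbT.
Qed.

Lemma FJ_atom {d} {M : tbLatticeType d} (e t : M) : okat e t -> FJ e t.
Proof.
move=> H; exists [:: t]; split; first by move=> s; rewrite inE => /eqP ->.
by rewrite /= join_l //; apply: okat_ge.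
Qed.



Lemma S_lemma {d} {M : tbLatticeType d} (Hmod : @modular d M) (L : seq M) :
  forall e : M, (forall t, t \in L -> okat e t) ->
  forall w c : M, e <= w -> covers w c -> c <= gen e L ->
  exists s, covers e s /\ s <= c /\ ~ s <= w.
Proof.
elim: L => [|t L IH] e HL w c Hew Hwc HcB.
- exfalso; have [Hlt _] := Hwc; have Hcw : c <= w := le_trans HcB Hew.
  by rewrite (lt_geF Hlt) in Hcw.
have HL' : forall s, s \in L -> okat e s by move=> s Hs; apply: HL; rewrite in_cons Hs orbT.
have Hwc' : w <= c by have [/ltW] := Hwc.
move: HcB; rewrite /=; set b := gen e L => HcB.
have Heb : e <= b := gen_ge e L.
case: (HL t (mem_head _ _)) => [Hte|Ht].
  by apply: IH HL' _ _ Hew Hwc _; move: HcB; rewrite Hte join_r.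
have Het : e <= t by have [/ltW] := Ht.
case: (boolP (c <= b)) => [Hcb|/negP Hcb]; first exact: IH HL' _ _ Hew Hwc Hcb.
have Htb : ~ t <= b by move=> H; apply: Hcb; move: HcB; rewrite join_r.
have Htbe : t `&` b = e.
  have H1 : e <= t `&` b by rewrite lexI Het Heb.
  have [E|E] := cov_eq Ht H1 (leIl t b); first by [].
  by exfalso; apply: Htb; rewrite -E leIr.
have HbB : covers b (t `|` b) by apply: persp1 => //; rewrite Htbe.
have HcbB : c `|` b = t `|` b.
  have H1 : c `|` b <= t `|` b by rewrite leUx HcB leUr.
  have [E|E] := cov_eq HbB (leUr b c) H1 => //.
  by exfalso; apply: Hcb; rewrite -E leUl.
case: (boolP (w <= b)) => [Hwb|/negP Hwb].
- have Hw0 : c `&` b = w.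
    have H1 : w <= c `&` b by rewrite lexI Hwc' Hwb.
    have [E|E] := cov_eq Hwc H1 (leIl c b) => //.
    by exfalso; apply: Hcb; rewrite -E leIr.
  case: (boolP (t <= c)) => [Htc|/negP Htc].
    exists t; split=> //; split=> // Htw; apply: Htb; exact: le_trans Htw Hwb.
  have Hec : e <= c := le_trans Hew Hwc'.
  have Hce : t `&` c = e.
    have H1 : e <= t `&` c by rewrite lexI Het Hec.
    have [E|E] := cov_eq Ht H1 (leIl t c) => //.
    by exfalso; apply: Htc; rewrite -E leIr.
  have Hcct : covers c (t `|` c) by apply: persp1 => //; rewrite Hce.
  set p := (t `|` c) `&` b.
  have Hp1 : p `|` c = t `|` c.
    have H := Hmod c b (t `|` c) (leUr c t).
    have Hsub : t `|` c <= t `|` b by rewrite leUx leUl HcB.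
    rewrite HcbB (meet_r Hsub) in H.
    by rewrite joinC /p meetC.
  have Hpc : p `&` c = w.
    apply: leA.
    + rewrite -Hw0 lexI leIr /=; exact: le_trans (leIl _ _) (leIr _ _).
    + by rewrite !lexI Hwc' Hwb (le_trans Hwc' (leUr _ _)).
  have Hwp : covers w p.
    by rewrite -{1}Hpc; apply: persp2 => //; rewrite Hp1.
  have Hpb : p <= b by exact: leIr.
  have [s' [Hs' [Hs'p Hs'w]]] := IH e HL' w p Hew Hwp Hpb.
  have Hes' : e <= s' by have [/ltW] := Hs'.
  have Hts' : t `&` s' = e.
    apply: leA; last by rewrite lexI Het Hes'.
    rewrite -Htbe lexI leIl /=; exact: le_trans (leIr _ _) (le_trans Hs'p Hpb).
  have Hs't : covers s' (t `|` s') by apply: persp1 => //; rewrite Hts'.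
  set s := c `&` (t `|` s').
  have Hsc : covers s (t `|` s').
    have E : (t `|` s') `|` c = t `|` c.
      apply: leA.
      * rewrite !leUx leUl leUr /= andbT.
        by apply: le_trans Hs'p _; rewrite /p leIl.
      * by rewrite (leUx t c) (leUr c) (le_trans (leUl t s') (leUl _ c)).
    by rewrite /s (meetC c (t `|` s')); apply: persp2 => //; rewrite E.
  have Hcp : c `&` p = w by rewrite meetC.
  have Hnss' : ~ s <= s'.
    move=> Hss'.
    have [E|E] := cov_eq Hsc Hss' (leUr s' t).
    + apply: Hs'w; rewrite -Hcp lexI Hs'p andbT E; exact: leIl.
    + by have [] := Hs't; rewrite -E ltxx.
  have Hnsw : ~ s <= w.
    move=> Hsw; apply: Hnss'.
    have H := Hmod s' t p Hs'p.
    have Htp : t `&` p <= s'.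
      apply: le_trans Hes'; rewrite -Htbe lexI leIl /=.
      exact: le_trans (leIr _ _) Hpb.
    rewrite (join_l Htp) in H.
    rewrite H lexI (le_trans Hsw (ltW (proj1 Hwp))) andbT (joinC s' t).
    exact: leIr.
  exists s; split; last by split; [exact: leIl|].
  have Hss : s `|` s' = t `|` s'.
    have H1 : s `|` s' <= t `|` s' by rewrite leUx leUr andbT; exact: leIr.
    have [E|E] := cov_eq Hs't (leUr s' s) H1 => //.
    by exfalso; apply: Hnss'; rewrite -E leUl.
  have Hsse : s `&` s' = e.
    have Hsw' : s' `&` w = e.
      have H1 : e <= s' `&` w by rewrite lexI Hes' Hew.
      have [E|E] := cov_eq Hs' H1 (leIl s' w) => //.
      by exfalso; apply: Hs'w; rewrite -E leIr.
    apply: leA.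
    + rewrite -Hsw' lexI leIr /= -Hcp lexI.
      rewrite (le_trans (leIl _ _) (leIl _ _)) /=.
      exact: le_trans (leIr _ _) Hs'p.
    + by rewrite lexI Hes' andbT lexI Hec /= (le_trans Hes' (leUr _ _)).
  by rewrite -Hsse; apply: persp2 => //; rewrite Hss.
- set w0 := w `&` b; set c0 := c `&` b.
  have Hc0w : c0 `&` w = w0 by rewrite /c0 meetC meetA (meet_l Hwc').
  have Hwbig : w `|` b = t `|` b.
    have H1 : w `|` b <= t `|` b by rewrite leUx leUr andbT (le_trans Hwc' HcB).
    have [E|E] := cov_eq HbB (leUr b w) H1 => //.
    by exfalso; apply: Hwb; rewrite -E leUl.
  have Hcov : covers w (c0 `|` w).
    have H1 : c0 `|` w <= c by rewrite leUx Hwc' andbT leIl.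
    have [E|E] := cov_eq Hwc (leUr w c0) H1 => //.
    + exfalso; have Hc0 : c0 <= w by rewrite -E leUl.
      have H := Hmod w b c Hwc'.
      rewrite Hwbig (meet_r HcB) meetC (join_l Hc0) in H.
      by have [] := Hwc; rewrite H ltxx.
    + by rewrite E.
  have Hcov' : covers w0 c0 by rewrite -Hc0w; apply: persp2.
  have Hew0 : e <= w0 by rewrite lexI Hew Heb.
  have [s [Hs [Hsc0 Hsw0]]] := IH e HL' w0 c0 Hew0 Hcov' (leIr _ _).
  exists s; split=> //; split; first exact: le_trans Hsc0 (leIl _ _).
  move=> Hsw; apply: Hsw0; rewrite lexI Hsw /=; exact: le_trans Hsc0 (leIr _ _).
Qed.



Lemma FJ_atomistic {d} {M : tbLatticeType d} (Hmod : @modular d M) (Hfin : @finite_length d M)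
  {e b : M} : FJ e b -> atomistic e b.
Proof.
move=> [L [HL Eb]]; split; first by rewrite -Eb gen_ge.
move=> c; elim/(well_founded_ind (wf_lt Hfin)): c => c IH [Hec Hcb].
case: (c =P e) => [->|Hne].
  exists (fun _ => False); split; first by [].
  split; first by split=> //; rewrite -Eb gen_ge.
  by split=> // u [Heu _] _.
have Hlt : e < c by apply/ltE'; split=> // E; apply: Hne.
have [w [Hew Hwc]] := cocover_exists Hfin e c Hlt.
have Hwc' : w < c by have [] := Hwc.
have [A [HA [_ [Hbd Hlst]]]] := IH w Hwc' (conj Hew (le_trans (ltW Hwc') Hcb)).
have HcL : c <= gen e L by rewrite Eb.
have [s [Hs [Hsc Hsw]]] := @S_lemma _ _ Hmod L e HL w c Hew Hwc HcL.
exists (fun t => A t \/ t = s); split.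
  move=> t [/HA //|->]; split=> //; split; first by have [/ltW] := Hs.
  exact: le_trans Hsc Hcb.
split; first by [].
split.
  by move=> t [/Hbd Ht|->] //; apply: le_trans Ht (ltW Hwc').
move=> u Hu Hub.
have Hwu : w <= u by apply: Hlst => // t Ht; apply: Hub; left.
have Hsu : s <= u by apply: Hub; right.
have H1 : w `|` s <= c by rewrite leUx (ltW Hwc') Hsc.
have [E|E] := cov_eq Hwc (leUl w s) H1.
  by exfalso; apply: Hsw; rewrite -E leUr.
by rewrite -E leUx Hwu Hsu.
Qed.

Lemma atomistic_lower {d} {M : tbLatticeType d} {e b z : M} :
  atomistic e b -> e <= z -> z <= b -> atomistic e z.
Proof.
move=> [Heb Hat] Hez Hzb; split=> // c [Hec Hcz].
have [A [HA [_ [Hbd Hlst]]]] := Hat c (conj Hec (le_trans Hcz Hzb)).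
exists A; split.
  move=> t Ht; have [[Het _] Hc] := HA t Ht; split=> //; split=> //.
  exact: le_trans (Hbd t Ht) Hcz.
split; first by [].
split=> // u [Heu Huz] Hu; apply: Hlst => //; split=> //; exact: le_trans Huz Hzb.
Qed.

Lemma atomistic_FJ {d} {M : tbLatticeType d} (Hfin : @finite_length d M)
  {e b : M} : atomistic e b -> FJ e b.
Proof.
move=> [Heb Hat].
have [A [HA [_ [Hbd Hlst]]]] := Hat b (conj Heb (lexx b)).
have P0 : exists L : seq M, (forall t, t \in L -> A t) /\ gen e L = e.
  by exists [::]; split=> // t; rewrite in_nil.
have [m [[L [HLA Em]] Hmax]] := @wf_max _ _ (wf_gt Hfin)
   (fun m => exists L : seq M, (forall t, t \in L -> A t) /\ gen e L = m) e P0.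
have Hmb : m <= b by rewrite -Em; apply: gen_le => // t /HLA /Hbd.
have Hbm : b <= m.
  apply: Hlst; first by split=> //; rewrite -Em gen_ge.
  move=> t Ht; apply: NNPP => Htm.
  apply: (Hmax (t `|` m)).
    exists (t :: L); split; last by rewrite /= Em.
    by move=> s; rewrite in_cons => /orP [/eqP ->|/HLA].
  apply/ltE'; split; first exact: leUr.
  by move=> E; apply: Htm; rewrite E leUl.
exists L; split; last by rewrite Em; apply: leA.
by move=> t /HLA /HA [_ H]; right.
Qed.

Lemma FJ_lower {d} {M : tbLatticeType d} (Hmod : @modular d M) (Hfin : @finite_length d M)
  {c B z : M} : FJ c B -> c <= z -> z <= B -> FJ c z.
Proof.
move=> H H1 H2; apply: (atomistic_FJ Hfin).
exact: atomistic_lower (FJ_atomistic Hmod Hfin H) H1 H2.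
Qed.

Lemma FJ_up {d} {M : tbLatticeType d} (Hmod : @modular d M)
  {x b a : M} : FJ x b -> x <= a -> a <= b -> FJ a b.
Proof.
move=> [L [HL Eb]] Hxa Hab.
exists (map (fun t => a `|` t) L); split.
  move=> t' /mapP [t Ht ->].
  case: (HL t Ht) => [->|Hc]; first by left; rewrite join_l.
  case: (boolP (t <= a)) => [Hta|/negP Hta]; first by left; rewrite join_l.
  right.
  have H1 : x <= t `&` a by rewrite lexI Hxa; have [/ltW ->] := Hc.
  have [E|E] := cov_eq Hc H1 (leIl t a).
  + by rewrite joinC; apply: persp1 => //; rewrite E.
  + by exfalso; apply: Hta; rewrite -E leIr.
apply: leA.
  apply: gen_le => // t' /mapP [t Ht ->].
  by rewrite leUx Hab -Eb gen_mem.
rewrite -{1}Eb; apply: gen_le.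
  exact: le_trans Hxa (gen_ge _ _).
move=> t Ht; apply: le_trans (leUr t a) _.
by apply: gen_mem; apply: map_f.
Qed.

Lemma FJ_trans {d} {M : tbLatticeType d} (Hmod : @modular d M)
  {c t : M} : FJ c (c `|` t) -> FJ (c `&` t) t.
Proof.
move=> [L [HL EL]].
have Hs : forall s, s \in L -> s <= c `|` t by move=> s Hs; rewrite -EL gen_mem.
have Hsc : forall s, s \in L -> (s `&` t) `|` c = s.
  move=> s Hs'; have Hcs := okat_ge _ _ (HL s Hs').
  have H := Hmod c t s Hcs.
  by rewrite (meet_r (Hs s Hs')) in H; rewrite joinC meetC.
exists (map (fun s => s `&` t) L); split.
  move=> s' /mapP [s Hs' ->].
  case: (HL s Hs') => [->|Hc]; first by left.
  right.
  have Hcs : c <= s by have [/ltW] := Hc.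
  have E : (s `&` t) `&` c = c `&` t.
    apply: leA.
    - by rewrite lexI leIr /= (le_trans (leIl _ _) (leIr _ _)).
    - by rewrite !lexI leIl leIr (le_trans (leIl _ _) Hcs).
  by rewrite -E; apply: persp2 => //; rewrite Hsc.
set W := gen _ _.
have HW : W <= t.
  by apply: gen_le; [exact: leIr | move=> s' /mapP [s _ ->]; exact: leIr].
have HctW : c `&` t <= W by exact: gen_ge.
have Hct : c `|` t <= W `|` c.
  rewrite -{1}EL; apply: gen_le; first exact: leUr.
  move=> s Hs'; rewrite -(Hsc s Hs') leUx leUr andbT.
  apply: le_trans (leUl W c); apply: gen_mem; apply: map_f (Hs').
apply: leA => //.
have H := Hmod W c t HW.
rewrite (join_l HctW) in H.
rewrite {1}H lexI lexx andbT.
exact: le_trans (leUr t c) Hct.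
Qed.

Lemma max_exists {d} {M : tbLatticeType d} (Hfin : @finite_length d M)
  {a b : M} : atomistic a b -> exists c B, max_atomistic c B /\ c <= a /\ b <= B.
Proof.
move=> Hab.
pose R (p' p : M * M) := p'.1 <= p.1 /\ p.2 <= p'.2 /\ p' <> p.
have HwfR : well_founded R.
  have H : forall c B, Acc R (c, B).
    move=> c; elim/(well_founded_ind (wf_lt Hfin)): c => c IHc B.
    elim/(well_founded_ind (wf_gt Hfin)): B => B IHB.
    constructor => [[c' B']] [/= H1 [H2 H3]].
    case: (c' =P c) => [Ec|Ec].
    - subst; apply: IHB; apply/ltE'; split=> // E; apply: H3; by rewrite E.
    - apply: IHc; apply/ltE'; split=> //.
  by move=> [c B]; apply: H.
have [[c B] [[/= Hat [Hca HbB]] Hmax]] := @wf_max _ _ HwfR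
  (fun p => atomistic p.1 p.2 /\ p.1 <= a /\ b <= p.2) (a, b) (conj Hab (conj (lexx a) (lexx b))).
exists c, B; split; last by [].
split=> // a' b' Hat' Hinc.
case: (classic ((a', b') = (c, B))) => [[-> ->]|Hne]; first by [].
exfalso.
have HcB : c <= B by have [] := Hat.
have [Hac _] := Hinc c (conj (lexx c) HcB).
have [_ HBb] := Hinc B (conj HcB (lexx B)).
apply: (Hmax (a', b')).
  by split=> //=; split; [exact: le_trans Hac Hca | exact: le_trans HbB HBb].
by split=> //.
Qed.



Lemma G_lemma {d} {M : tbLatticeType d} (Hmod : @modular d M) (Hfin : @finite_length d M)
  (x bx c B : M) : FJ x bx -> FJ c B -> x <= c `|` x -> c `|` x <= bx -> bx <= B ->
  FJ (c `&` x) bx.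
Proof.
move=> FJx FJc _ Hfb HbB.
set f := c `|` x.
have Hcf : c <= f := leUl c x.
have Hxf : x <= f := leUr x c.
have HcB : c <= B by have [L [HL <-]] := FJc; exact: gen_ge.
have FJex : FJ (c `&` x) x.
  apply: (FJ_trans Hmod); apply: (FJ_lower Hmod Hfin FJc (leUl c x)).
  exact: le_trans Hfb HbB.
have FJec : FJ (c `&` x) c.
  rewrite meetC; apply: (FJ_trans Hmod); apply: (FJ_lower Hmod Hfin FJx (leUl x c)).
  by rewrite joinC.
have FJef : FJ (c `&` x) f by apply: FJ_join.
have [L [HL EL]] := FJx.
have Claim : forall L', (forall t, t \in L' -> t \in L) -> FJ (c `&` x) (f `|` gen x L').
  elim=> [|t L' IH] HL' /=; first by rewrite join_l.
  have IH' := IH (fun s Hs => HL' s (ltac:(by rewrite in_cons Hs orbT))).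
  have HtL : t \in L by apply: HL'; rewrite mem_head.
  rewrite joinCA.
  case: (boolP (t <= f)) => [Htf|/negP Htf].
    by rewrite join_r // (le_trans Htf (leUl _ _)).
  rewrite joinC; apply: FJ_join => //.
  case: (HL t HtL) => [Etx|Ht]; first by exfalso; apply: Htf; rewrite Etx.
  have H1 : x <= t `&` f by rewrite lexI Hxf andbT; have [/ltW] := Ht.
  have [E|E] := cov_eq Ht H1 (leIl t f); last first.
    by exfalso; apply: Htf; rewrite -E leIr.
  have Etc : c `&` t = c `&` x.
    have Hxt : x <= t by have [/ltW] := Ht.
    apply: leA.
    - rewrite lexI leIl /= -E lexI leIr /=.
      exact: le_trans (leIl _ _) Hcf.
    - by rewrite lexI leIl /= (le_trans (leIr _ _) Hxt).
  rewrite -Etc; apply: (FJ_trans Hmod).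
  apply: (FJ_lower Hmod Hfin FJc (leUl c t)).
  rewrite leUx HcB /=; apply: le_trans HbB; rewrite -EL; exact: gen_mem.
have := Claim L (fun t H => H).
by rewrite EL join_r.
Qed.



Theorem lemma6p3 (disp : Order.disp_t) (M : tbLatticeType disp)
  (Hmod : @modular disp M) (Hfin : @finite_length disp M) (x y : M) :
  skel_covers x y ->
  x < y /\ (forall xs : M, is_star x xs -> y <= xs).
Proof.
move=> [[bx [Hatx Hmaxx]] [Sy [Hxy Hno]]].
split=> // xs Hstar.
have Hxbx : x <= bx by have [] := Hatx.
have Y : y <= bx.
  apply: NNPP => Hyb.
  set a := y `&` bx.
  have Hxa : x <= a by rewrite lexI (ltW Hxy) Hxbx.
  have Hay : a < y.
    apply/ltE'; split; first exact: leIl.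
    by move=> E; apply: Hyb; rewrite -E leIr.
  have [dd [Hcd Hdy]] := cover_exists Hfin a y Hay.
  have FJx := atomistic_FJ Hfin Hatx.
  have FJa := FJ_up Hmod FJx Hxa (leIr bx y).
  have FJad := FJ_join _ _ _ FJa (FJ_atom _ _ (or_intror Hcd)).
  have Hatad := FJ_atomistic Hmod Hfin FJad.
  have [c [B [HmaxcB [Hca HbB]]]] := max_exists Hfin Hatad.
  have FJc := atomistic_FJ Hfin (proj1 HmaxcB).
  have HbxB : bx <= B := le_trans (leUl bx dd) HbB.
  have Hcbx : c <= bx := le_trans Hca (leIr bx y).
  have Hxc : x <= c.
    have Hcxb : c `|` x <= bx by rewrite leUx Hcbx Hxbx.
    have FJe := G_lemma Hmod Hfin _ _ _ _ FJx FJc (leUr x c) Hcxb HbxB.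
    have Hate := FJ_atomistic Hmod Hfin FJe.
    have Hex : c `&` x <= x := leIr x c.
    have Hinc : forall z, in_itv x bx z -> in_itv (c `&` x) bx z.
      by move=> z [H1 H2]; split=> //; apply: le_trans Hex H1.
    have [H1 _] := (Hmaxx _ _ Hate Hinc (c `&` x)).2 (conj (lexx _) (le_trans Hex Hxbx)).
    exact: le_trans H1 (leIl _ _).
  have Hcs : in_skeleton c by exists B.
  case: (c =P x) => [Ecx|Ecx].
    subst c.
    have Hinc : forall z, in_itv x bx z -> in_itv x B z.
      by move=> z [H1 H2]; split=> //; apply: le_trans H2 HbxB.
    have Hdd : in_itv x B dd.
      split; first by apply: le_trans Hxa _; have [/ltW] := Hcd.
      exact: le_trans (leUr dd bx) HbB.
    have [_ Hddb] := (Hmaxx _ _ (proj1 HmaxcB) Hinc dd).2 Hdd.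
    have Hda : dd <= a by rewrite lexI Hdy Hddb.
    by have [Hlt _] := Hcd; rewrite (lt_geF Hlt) in Hda.
  apply: (Hno c Hcs); split.
    by apply/ltE'; split=> // E; apply: Ecx.
  exact: le_lt_trans Hca Hay.
have Hxtop : x < \top := lt_le_trans Hxy (lex1 y).
have [Hub Hleast] := (proj2 Hstar) Hxtop.
have [t [Ht _]] := cover_exists Hfin x y Hxy.
have Hxxs : x <= xs by apply: le_trans (Hub t Ht); have [/ltW] := Ht.
have [A [HA [_ [Hbd Hlst]]]] := (proj2 Hatx) y (conj (ltW Hxy) Y).
have Hyxb : y <= xs `&` bx.
  apply: Hlst; first by split; [rewrite lexI Hxxs Hxbx | exact: leIr].
  move=> s Hs; have [[_ Hsb] Hsc] := HA s Hs.
  by rewrite lexI Hsb Hub.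
exact: le_trans Hyxb (leIl _ _).
Qed.
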